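(* Consider an infinite execution $\gamma_0\gamma_1\ldots$ of the unison dynamics with $\gamma_0$ satisfying $WU_0$, in which every process increments its clock infinitely often, and let $\bot_0$ and the cuts $C_k$ be as in the context. Let $k\ge\bot_0+D$ and $\varrho\ge 1$ be integers. Then $C_k$ and $C_{k+\varrho}$ are coherent cuts with $C_k\preceq C_{k+\varrho}$, and the segment $[C_k,C_{k+\varrho}]$, with the events of $C_{k+\varrho}$ taken as decide events, is a $\varrho$-wavelet.
   Context: Let $G=(V,E)$ be a finite connected undirected graph, $|V|=n\ge 2$, $\mathcal N_p$ the set of neighbors of $p$, $d(p,q)$ the hop distance, $D$ the diameter, and $V(p,r)=\{q\in V: d(p,q)\le r\}$. Fix an integer $M\ge 3$; for an integer $a$, $\bar a\in\{0,\dots,M-1\}$ denotes its residue modulo $M$. Each process $p$ holds a clock $p.r\in\{0,\dots,M-1\}$; $p^t.r$ denotes its value in configuration $\gamma_t$. Integers $a,b$ are locally comparable if $\min(\overline{a-b},\overline{b-a})\le 1$, and then $b\ominus a=\overline{b-a}$ if $\overline{b-a}\le 1$, and $b\ominus a=-\overline{a-b}$ otherwise. A configuration satisfies $WU$ if for every edge $\{p,q\}$, $p.r$ and $q.r$ are locally comparable. The delay of a path $\mu=p_0p_1\ldots p_k$ is $\delta_\mu=\sum_{i=0}^{k-1}(p_{i+1}.r\ominus p_i.r)$ ($0$ if $k=0$). A configuration satisfies $WU_0$ if it satisfies $WU$ and the delay is intrinsic: for all $p,q$, all paths from $p$ to $q$ have the same delay, denoted $\delta_{(p,q)}$ ($\delta^t_{(p,q)}$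 in $\gamma_t$). Dynamics: a process $p$ is enabled iff for every $q\in\mathcal N_p$, $q.r=p.r$ or $q.r=\overline{p.r+1}$. In a transition $\gamma_t\to\gamma_{t+1}$ a nonempty set of processes enabled in $\gamma_t$ is chosen (by an arbitrary, possibly unfair, daemon) and each of them sets $p.r:=\overline{p.r+1}$; other clocks are unchanged. Events: $(p,0)$ is an event for every $p$; $(p,t+1)$ is an event iff $p$ increments in $\gamma_t\to\gamma_{t+1}$. Causal relation $\leadsto$: for an event $(p,t)$ with $t>0$, $(p,t')\leadsto(p,t)$ where $t'$ is the largest time $<t$ such that $(p,t')$ is an event, and for each $q\in\mathcal N_p$, $(q,t')\leadsto(p,t)$ where $t'$ is the largest time $<t$ such that $(q,t')$ is an event. $\preceq$ is the reflexive–transitive closure of $\leadsto$. Lifting: assume $\gamma_0$ satisfies $WU_0$. Choose $p_0$ with $\delta^0_{(p_0,q)}\ge 0$ for all $q\in V$, and let $\bot_0=p_0^0.r$. Define integers $\widetilde{p^t.r}$ by $\widetilde{p^0.r}=\bot_0+\delta^0_{(p_0,p)}$, and $\widetilde{p^{t+1}.r}=\widetilde{p^t.r}+1$ if $p$ increments in $\gamma_t\to\gamma_{t+1}$, $\widetilde{p^{t+1}.r}=\widetilde{p^t.r}$ otherwise. For an integer $k$, $t_{p,k}$ is the smallest $t$ with $\widetilde{p^t.r}=k$, and $C_k=\{(p,t_{p,k}):p\in V\}$. A cut is a map $C:p\mapsto t^C_p$ (identified with $\{(p,t^C_p)\}$) with each $(p,t^C_p)$ an event. $C$ is coherent if whenever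 $(q,t')\preceq(p,t)\preceq(p,t^C_p)$, then $(q,t')\preceq(q,t^C_q)$. For cuts, $C\preceq C'$ means every event $(p,t)$ with $t\le t^C_p$ satisfies $t\le t^{C'}_p$. For coherent cuts $C\preceq C'$, the segment $[C,C']$ is the set of events $(p,t)$ with $(p,t^C_p)\preceq(p,t)\preceq(p,t^{C'}_p)$. A $\varrho$-wavelet is a segment $[C,C']$ together with a designated nonempty set of decide events in it such that for every decide event $(p,t)$, every process $q\in V(p,\varrho)$ has an event $(q,t')\in[C,C']$ with $(q,t')\preceq(p,t)$. *)

(* Defs.v *)
From HB Require Import structures.
From mathcomp Require Import all_boot all_order all_algebra.
From Stdlib Require Import Relation_Operators ClassicalEpsilon.
Set Implicit Arguments. Unset Strict Implicit. Unset Printing Implicit Defensive.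
Import Order.TTheory GRing.Theory Num.Theory.

Local Open Scope ring_scope.

Section Unison.
Variables (V : finType) (e : rel V) (M : nat).

Definition res (a : int) : int := (a %% (M%:Z))%Z.

Definition loc_comparable (a b : int) : bool :=
  Num.min (res (a - b)) (res (b - a)) <= 1.

Definition ominus (b a : int) : int :=
  if res (b - a) <= 1 then res (b - a) else - res (a - b).

Definition WU (c : V -> nat) : Prop :=
  forall p q, e p q -> loc_comparable (c p)%:Z (c q)%:Z.

Fixpoint delay (c : V -> nat) (x : V) (s : seq V) : int :=
  match s with
  | [::] => 0
  | y :: s' => ominus (c y)%:Z (c x)%:Z + delay c y s'
  end.

Definition WU0 (c : V -> nat) : Prop :=
  WU c /\
  forall p s1 s2, path e p s1 -> path e p s2 -> last p s1 = last p s2 ->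
    delay c p s1 = delay c p s2.

(* the intrinsic delay delta_(p,q): the delay of (some, hence any under WU0)
   path from p to q *)
Definition delta (c : V -> nat) (p q : V) : int :=
  epsilon (inhabits 0)
    (fun d => exists s, [/\ path e p s, last p s = q & delay c p s = d]).

Definition dist_le (p q : V) (r : nat) : Prop :=
  exists s, [/\ path e p s, last p s = q & (size s <= r)%N].

Definition is_diameter (D : nat) : Prop :=
  (forall p q, dist_le p q D) /\
  (exists p q, forall s, path e p s -> last p s = q -> (D <= size s)%N).

Definition connected : Prop := forall p q, exists s, path e p s /\ last p s = q.

(* executions: gamma t = configuration gamma_t, sched t = set of processes
   chosen by the daemon in gamma_t -> gamma_(t+1) *)
Definition enabled (c : V -> nat) (p : V) : Prop :=
  forall q, e p q -> c q = c p \/ c q = ((c p).+1 %% M)%N.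

Definition execution (gamma : nat -> V -> nat) (sched : nat -> V -> bool) : Prop :=
  (forall t p, (gamma t p < M)%N) /\
  forall t, [/\ exists p, sched t p,
                (forall p, sched t p -> enabled (gamma t) p) &
                (forall p, gamma t.+1 p =
                   if sched t p then ((gamma t p).+1 %% M)%N else gamma t p)].

Definition event (sched : nat -> V -> bool) (p : V) (t : nat) : Prop :=
  t = 0%N \/ exists t0, t = t0.+1 /\ sched t0 p.

Definition last_event_before (sched : nat -> V -> bool) (q : V) (t' t : nat) : Prop :=
  [/\ (t' < t)%N, event sched q t' &
      forall s, (t' < s)%N -> (s < t)%N -> ~ event sched q s].

Definition leadsto (sched : nat -> V -> bool) (a b : V * nat) : Prop :=
  let: (q, t') := a in let: (p, t) := b in
  [/\ (0 < t)%N, event sched p t, (q = p \/ e p q) & last_event_before sched q t' t].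

Definition preceq (sched : nat -> V -> bool) : V * nat -> V * nat -> Prop :=
  clos_refl_trans (V * nat) (leadsto sched).

Fixpoint lifted (lift0 : V -> int) (sched : nat -> V -> bool) (t : nat) (p : V) : int :=
  match t with
  | 0%N => lift0 p
  | t0.+1 => lifted lift0 sched t0 p + (sched t0 p)%:Z
  end.

Definition is_Ck (lift0 : V -> int) (sched : nat -> V -> bool) (k : int)
    (C : V -> nat) : Prop :=
  forall p, lifted lift0 sched (C p) p = k /\
            forall t, (t < C p)%N -> lifted lift0 sched t p <> k.

Definition is_cut (sched : nat -> V -> bool) (C : V -> nat) : Prop :=
  forall p, event sched p (C p).

Definition coherent (sched : nat -> V -> bool) (C : V -> nat) : Prop :=
  is_cut sched C /\
  forall q t' p t, preceq sched (q, t') (p, t) -> preceq sched (p, t) (p, C p) ->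
    preceq sched (q, t') (q, C q).

Definition cut_le (sched : nat -> V -> bool) (C C' : V -> nat) : Prop :=
  forall p t, event sched p t -> (t <= C p)%N -> (t <= C' p)%N.

Definition in_segment (sched : nat -> V -> bool) (C C' : V -> nat) (p : V) (t : nat) : Prop :=
  [/\ event sched p t, preceq sched (p, C p) (p, t) & preceq sched (p, t) (p, C' p)].

Definition wavelet (sched : nat -> V -> bool) (rho : nat) (C C' : V -> nat)
    (decide : V -> nat -> Prop) : Prop :=
  [/\ coherent sched C /\ coherent sched C', cut_le sched C C',
      (exists p t, decide p t),
      (forall p t, decide p t -> in_segment sched C C' p t) &
      forall p t, decide p t -> forall q, dist_le p q rho ->
        exists t', in_segment sched C C' q t' /\ preceq sched (q, t') (p, t)].

End Unison.

(* Main.v *)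
Require Import Defs.
From Stdlib Require Import ZArith Lia ClassicalEpsilon Relation_Operators.
Lemma Zsmall (w m c : Z) : (3 <= m)%Z -> (w * m = c)%Z -> (-3 < c < 3)%Z -> c = 0%Z.
Proof.
intros Hm Hw Hc. destruct (Z.lt_trichotomy w 0) as [H|[H|H]].
- assert (w * m <= - m)%Z by nia. lia.
- subst w. lia.
- assert (m <= w * m)%Z by nia. lia.
Qed.
From mathcomp Require Import all_boot all_order all_algebra.
Import Order.TTheory GRing.Theory Num.Theory.
Local Open Scope ring_scope.
Set Implicit Arguments. Unset Strict Implicit. Unset Printing Implicit Defensive.
Definition fz (x : int) : Z := match x with Posz n => Z.of_nat n | Negz n => Z.sub (Z.opp (Z.of_nat n)) (Zpos xH) end.
Ltac natlia := rewrite -?plusE -?minusE -?multE; repeat match goal with H : is_true (leq _ _) |- _ => move/ssrnat.leP: H => H end; lia.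
Lemma fzD x y : fz (x + y) = Z.add (fz x) (fz y).
Proof.
case: x => a; case: y => b; rewrite /GRing.add /=.
all: try (case: ltnP => H /=).
all: natlia.
Qed.
Lemma fzN x : fz (- x) = Z.opp (fz x).
Proof. case: x => [[|a]|a] /=; lia. Qed.
Lemma fzB x y : fz (x - y) = Z.sub (fz x) (fz y).
Proof. rewrite fzD fzN; lia. Qed.
Lemma fzP (n : nat) : fz (Posz n) = Z.of_nat n. Proof. by []. Qed.
Lemma fzM x y : fz (x * y) = Z.mul (fz x) (fz y).
Proof.
case: x => a; case: y => b; rewrite /GRing.mul /= ?fzN /=; natlia.
Qed.
Lemma fz_le x y : x <= y <-> Z.le (fz x) (fz y).
Proof.
case: x => a; case: y => b; rewrite /Order.le /= /Num.Def.ler /=; split => H; try natlia; try lia; try done; apply/ssrnat.leP; lia.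
Qed.
Lemma fz_inj x y : x = y <-> fz x = fz y.
Proof. split=> [->//|H]; apply/eqP; rewrite eq_le; apply/andP; split; apply/fz_le; lia. Qed.
Lemma fz_lt x y : x < y <-> Z.lt (fz x) (fz y).
Proof. rewrite lt_neqAle; split. move=>/andP[H1 /fz_le H2]. have: fz x <> fz y. by move/fz_inj=> E; rewrite E eqxx in H1. lia.
move=> H; apply/andP; split; last by apply/fz_le; lia. apply/eqP=> /fz_inj; lia. Qed.
Lemma fz1 : fz 1 = Zpos xH. Proof. by []. Qed.
Lemma fz0 : fz 0 = Z0. Proof. by []. Qed.

Ltac int_to_Z := intros;
  repeat match goal with
  | H : is_true (@Order.le _ _ _ _) |- _ => apply fz_le in H
  | H : is_true (@Order.lt _ _ _ _) |- _ => apply fz_lt in H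
  | H : @eq ?T _ _ |- _ => unify T int; apply fz_inj in H
  | H : is_true (leq _ _) |- _ => move/ssrnat.leP: H => H
  | |- is_true (@Order.le _ _ _ _) => apply fz_le
  | |- is_true (@Order.lt _ _ _ _) => apply fz_lt
  | |- @eq ?T _ _ => unify T int; apply fz_inj
  | |- is_true (leq _ _) => apply/ssrnat.leP
  | H : ~ (@eq ?T _ _) |- _ => unify T int; rewrite fz_inj in H
  end;
  repeat match goal with
  | H : Z.le _ _ |- _ => revert H
  | H : Z.lt _ _ |- _ => revert H
  | H : @eq Z _ _ |- _ => revert H
  | H : ~ @eq Z _ _ |- _ => revert H
  | H : le _ _ |- _ => revert H
  | H : lt _ _ |- _ => revert H
  | H : @eq nat _ _ |- _ => revert H
  end;
  repeat first [rewrite fzD | rewrite fzB | rewrite fzN | rewrite fzM | rewrite fz1 | rewrite fz0]; rewrite /= -?plusE -?minusE -?multE; intros.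
Ltac ilia := int_to_Z; first [lia | nia].


Definition cong (M : nat) (x y : int) := exists z : int, x - y = z * (M%:Z).

Section PartA.
Variables (V : finType) (e : rel V) (M : nat).
Hypothesis HM : (3 <= M)%N.

Lemma res_ge0 a : 0 <= res M a.
Proof. apply: modz_ge0; apply/eqP => /fz_inj /=; move/ssrnat.leP: HM; lia. Qed.

Lemma res_cong a : cong M (res M a) a.
Proof. exists (- (a %/ M%:Z)%Z). have := divz_eq a M%:Z; rewrite /res; ilia. Qed.

Lemma ominus_cong b a : cong M (ominus M b a) (b - a).
Proof.
rewrite /ominus; case: ifP => _.
  by apply: res_cong.
have [z Hz] := res_cong (a - b); exists (- z); ilia.
Qed.

Lemma ominus_le1 b a : ominus M b a <= 1.
Proof.
rewrite /ominus; case: ifP => // _; have := res_ge0 (a - b); ilia.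
Qed.

Lemma ominus_ge b a : loc_comparable M a b -> -1 <= ominus M b a.
Proof.
rewrite /loc_comparable /ominus => H; case: ifP => H2.
  have := res_ge0 (b - a); ilia.
move: H; rewrite ge_min H2 orbF; ilia.
Qed.

Lemma delay_rcons (c : V -> nat) x s y :
  delay M c x (rcons s y) = delay M c x s + ominus M (c y)%:Z (c (last x s))%:Z.
Proof.
elim: s x => [|z s IH] x /=; first by rewrite addr0 add0r.
by rewrite IH addrA.
Qed.

Lemma delay_le (c : V -> nat) x s : delay M c x s <= (size s)%:Z.
Proof.
elim: s x => [|z s IH] x //=.
have := IH z; have := ominus_le1 (c z)%:Z (c x)%:Z; ilia.
Qed.

Lemma delay_cong (c : V -> nat) x s :
  cong M (delay M c x s) ((c (last x s))%:Z - (c x)%:Z).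
Proof.
elim: s x => [|z s IH] x /=; first by exists 0; ilia.
have [z1 H1] := IH z; have [z2 H2] := ominus_cong (c z)%:Z (c x)%:Z.
exists (z1 + z2); move: H1 H2; rewrite mulrDl; ilia.
Qed.

Lemma delta_path (c : V -> nat) p s q : WU0 e M c -> path e p s -> last p s = q ->
  delta e M c p q = delay M c p s.
Proof.
move=> [_ HU] Hp Hl; rewrite /delta.
have := epsilon_spec (inhabits (0:int))
   (fun d => exists s, [/\ path e p s, last p s = q & delay M c p s = d]).
case.
  by exists (delay M c p s), s.
move=> s' [Hp' Hl' <-]; apply: HU => //; by rewrite Hl Hl'.
Qed.
End PartA.

Section PartB.
Variables (V : finType) (e : rel V) (M : nat) (gamma : nat -> V -> nat)
  (sched : nat -> V -> bool) (lift0 : V -> int).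
Hypothesis HM : (3 <= M)%N.
Hypothesis Hsym : symmetric e.
Hypothesis Hex : execution e M gamma sched.

Local Notation L := (lifted lift0 sched).

Definition Inv t := (forall p, cong M (L t p) (gamma t p)%:Z) /\
   (forall p q, e p q -> L t q <= L t p + 1).

Lemma L_succ t p : L t.+1 p = L t p + (sched t p)%:Z.
Proof. by []. Qed.

Lemma ex_en t p : sched t p -> enabled e M (gamma t) p.
Proof. by case: (Hex.2 t) => _ H _; apply: H. Qed.
Lemma ex_g t p : gamma t.+1 p = if sched t p then ((gamma t p).+1 %% M)%N else gamma t p.
Proof. by case: (Hex.2 t) => _ _ H; apply: H. Qed.

Lemma divn_eqZ (n : nat) : n = (n %/ M * M + n %% M)%N.
Proof. exact: divn_eq. Qed.

Lemma enabled_le t p q : Inv t -> sched t p -> e p q -> L t p <= L t q.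
Proof.
move=> [C1 C2] Hs Hpq.
have Hen := ex_en Hs Hpq.
have H1 := C2 p q Hpq; have H2 := C2 q p (etrans (Hsym q p) Hpq).
have [z1 E1] := C1 p; have [z2 E2] := C1 q.
have := divn_eqZ (gamma t p).+1.
have HM3 := HM. case: Hen => Hg; int_to_Z.
  destruct (Z.le_gt_cases (fz (L t p)) (fz (L t q))) as [|Hlt]; first done.
  have := Zsmall (Z.sub (fz z2) (fz z1)) (Z.of_nat M) (Z.sub (Z.sub (fz (L t q)) (fz (L t p))) (Z.sub (Z.of_nat (gamma t q)) (Z.of_nat (gamma t p)))).
  lia.
destruct (Z.le_gt_cases (fz (L t p)) (fz (L t q))) as [|Hlt]; first done.
have := Zsmall (Z.sub (Z.sub (fz z2) (fz z1)) (Z.of_nat ((gamma t p).+1 %/ M))) (Z.of_nat M) (Zneg (xO xH)).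
lia.
Qed.

Lemma Inv_step t : Inv t -> Inv t.+1.
Proof.
move=> HI; have [C1 C2] := HI; split.
  move=> p; have [z E] := C1 p; rewrite L_succ ex_g.
  case: (sched t p).
    exists (z + ((gamma t p).+1 %/ M)%:Z).
    have := divn_eqZ (gamma t p).+1; ilia.
  by exists z; ilia.
move=> p q Hpq; rewrite !L_succ.
have H1 := C2 p q Hpq.
case Hq: (sched t q); case Hp: (sched t p); try ilia.
have := enabled_le HI Hq (etrans (Hsym q p) Hpq); ilia.
Qed.

Hypothesis HI0 : Inv 0.
Hypothesis Hinf : forall t p, exists t', (t <= t')%N /\ sched t' p.

Lemma Inv_all t : Inv t.
Proof. elim: t => [|t IH]; [exact: HI0 | exact: Inv_step]. Qed.

Lemma L_mono p t1 t2 : (t1 <= t2)%N -> L t1 p <= L t2 p.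
Proof.
move=> H; rewrite -(subnKC H); elim: (t2 - t1)%N => [|n IH]; first by rewrite addn0.
rewrite addnS L_succ; ilia.
Qed.

Lemma L_ivt p v t : L 0 p <= v -> v <= L t p -> exists t0, (t0 <= t)%N /\ L t0 p = v.
Proof.
elim: t => [|t IH] H1 H2; first by exists 0%N; split => //; ilia.
case: (boolP (v <= L t p)) => H3.
  by have [t0 [? ?]] := IH H1 H3; exists t0; split => //; apply: leqW.
move: H3; rewrite -ltNge => H3.
exists t.+1; split => //; move: H2 H3; rewrite L_succ; case: (sched t p) => /=; ilia.
Qed.

Lemma L_unb p (n : nat) : exists t, L 0 p + n%:Z <= L t p.
Proof.
elim: n => [|n [t IH]]; first by exists 0%N; ilia.
have [t' [H1 H2]] := Hinf t p.
exists t'.+1; rewrite L_succ H2; have := L_mono p H1; ilia.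
Qed.

Lemma event_S p t : event sched p t.+1 <-> sched t p.
Proof.
split; first by case=> // [[t0 [[->]]]].
by move=> H; right; exists t.
Qed.

Lemma event_0 p : event sched p 0.
Proof. by left. Qed.

Lemma last_ev q t : (0 < t)%N -> exists t', last_event_before sched q t' t /\ L t' q = L t.-1 q.
Proof.
elim: t => [|t IH] // _.
case: t IH => [|t] IH.
  exists 0%N; split => //; split => //; first exact: event_0.
  move=> s H1 H2; by rewrite ltnS leqNgt H1 in H2.
case Hs: (sched t q).
  exists t.+1; split => //; split => //; first by apply/event_S.
  by move=> s H1 H2; rewrite ltnS leqNgt H1 in H2.
have [t' [[H1 H2 H3] H4]] := IH isT.
exists t'; split; last by rewrite H4 (L_succ t q) Hs addr0.
split => //; first by apply: ltnW.
move=> s Hs1 Hs2; case: (ltngtP s t.+1) => Hc.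
- by apply: H3.
- by rewrite ltnS leqNgt Hc in Hs2.
- by rewrite Hc => /event_S; rewrite Hs.
Qed.

Lemma last_ev_L q t' t : last_event_before sched q t' t -> L t' q = L t.-1 q.
Proof.
case=> H1 H2 H3.
have Hgen : forall n, (t' + n < t)%N -> L t' q = L (t' + n) q.
  elim=> [|n IH] Hn; first by rewrite addn0.
  rewrite addnS L_succ -IH; last by apply: ltn_trans _ Hn; rewrite addnS.
  case Hs: (sched (t' + n)%N q); last by rewrite addr0.
  exfalso; apply: (H3 (t' + n).+1); first by rewrite ltnS leq_addr.
    by rewrite -addnS.
  by apply/event_S.
have := Hgen (t.-1 - t')%N; rewrite subnKC; last by rewrite -ltnS prednK // (leq_ltn_trans _ H1).
by apply; rewrite prednK // (leq_ltn_trans _ H1).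
Qed.

Lemma Ck_exists v : (forall p, lift0 p <= v) -> exists C, is_Ck lift0 sched v C.
Proof.
move=> Hv.
have H : forall p, exists n, L n p == v.
  move=> p; have [t Ht] := L_unb p `|v - lift0 p|%N.
  have En : (`|v - lift0 p|%N)%:Z = v - lift0 p by rewrite gez0_abs // subr_ge0.
  have Hvt : v <= L t p by move: Ht; rewrite En /=; ilia.
  have [t0 [_ Ht0]] := @L_ivt p v t (Hv p) Hvt.
  by exists t0; apply/eqP.
exists (fun p => ex_minn (H p)) => p.
case: ex_minnP => m /eqP Hm Hmin; split => // t Ht Heq.
by have := Hmin t (introT eqP Heq); rewrite leqNgt Ht.
Qed.

Section Ck.
Variables (v : int) (C : V -> nat).
Hypothesis Hv : forall p, lift0 p <= v.
Hypothesis HC : is_Ck lift0 sched v C.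

Lemma Ck_val p : L (C p) p = v.
Proof. by case: (HC p). Qed.

Lemma Ck_lt p t : (t < C p)%N -> L t p < v.
Proof.
move=> Ht; case: (boolP (L t p < v)) => // H.
move: H; rewrite -leNgt => H.
have [t0 [Ht0 E]] := @L_ivt p v t (Hv p) H.
by case: (HC p) => _ /(_ t0 (leq_ltn_trans Ht0 Ht)).
Qed.

Lemma Ck_ge p t : (C p <= t)%N -> v <= L t p.
Proof. by move=> H; rewrite -(Ck_val p); apply: L_mono. Qed.

Lemma Ck_event p : event sched p (C p).
Proof.
case E: (C p) => [|c]; first exact: event_0.
apply/event_S; have := Ck_lt (p := p) (t := c); rewrite E ltnSn => /(_ isT).
have := Ck_val p; rewrite E L_succ; case: (sched c p) => //; rewrite addr0 => ->.
by rewrite ltxx.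
Qed.
End Ck.

Lemma ev_pos p t : event sched p t -> (0 < t)%N -> sched t.-1 p.
Proof. by case: t => // t /event_S. Qed.

Lemma leadsto_L q t' p t : leadsto e sched (q, t') (p, t) -> L t' q <= L t p.
Proof.
move=> [H0 Hev Hqp Hlast].
have Hs := ev_pos Hev H0.
have E := last_ev_L Hlast.
have Et : L t p = L t.-1 p + 1 by rewrite -{1}(prednK H0) L_succ Hs.
case: Hqp => [Hq|Hpq].
  subst q; rewrite E Et; ilia.
have [_ C2] := Inv_all t.-1.
have := C2 p q Hpq; rewrite E Et; ilia.
Qed.

Lemma preceq_L a b : preceq e sched a b -> L a.2 a.1 <= L b.2 b.1.
Proof.
elim=> [[q t'] [p t] H|x|x y z _ H1 _ H2] /=.
- exact: leadsto_L.
- by [].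
- exact: le_trans H1 H2.
Qed.

Lemma preceq_ev a b : preceq e sched a b -> a = b \/ event sched a.1 a.2.
Proof.
elim=> [[q t'] [p t] [_ _ _ [_ H _]]|x|x y z _ H1 _ H2].
- by right.
- by left.
- case: H1 => [->|]; [exact: H2 | by right].
Qed.

Lemma self_chain p t1 t2 : event sched p t1 -> event sched p t2 -> (t1 <= t2)%N ->
  preceq e sched (p, t1) (p, t2).
Proof.
move=> H1; elim: t2 {-2}t2 (leqnn t2) => [|n IH] t2 Hn H2 Hle.
  have E2 : t2 = 0%N by apply/eqP; rewrite -leqn0.
  have E1 : t1 = 0%N by apply/eqP; rewrite -leqn0 -E2.
  by rewrite E1 E2; apply: rt_refl.
case: (ltngtP t1 t2) Hle => // Hlt _; last by rewrite Hlt; apply: rt_refl.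
have H0 : (0 < t2)%N by apply: leq_ltn_trans Hlt.
have [t' [[Ht'1 Ht'2 Ht'3] _]] := last_ev p H0.
have Hle' : (t1 <= t')%N.
  by case: (leqP t1 t') => // Hc; exfalso; apply: (Ht'3 t1).
apply: rt_trans (IH t' _ Ht'2 Hle') _.
  by rewrite -ltnS; apply: leq_trans Ht'1 Hn.
apply: rt_step; split => //; by left.
Qed.

Lemma back_step p t q : event sched p t -> (0 < t)%N -> e p q ->
  exists t', [/\ leadsto e sched (q, t') (p, t), L t p - 1 <= L t' q & event sched q t'].
Proof.
move=> Hev H0 Hpq.
have Hs := ev_pos Hev H0.
have [t' [Hl E]] := last_ev q H0.
exists t'; split => //; last by case: Hl.
  by split => //; right.
have Et : L t p = L t.-1 p + 1 by rewrite -{1}(prednK H0) L_succ Hs.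
have := enabled_le (Inv_all t.-1) Hs Hpq; rewrite E Et; ilia.
Qed.

Lemma Ck_coherent v C : (forall p, lift0 p <= v) -> is_Ck lift0 sched v C -> coherent e sched C.
Proof.
move=> Hv HC; split; first by move=> p; apply: (Ck_event Hv HC).
move=> q t' p t H1 H2.
have HL := preceq_L (rt_trans _ _ _ _ _ H1 H2); rewrite /= (Ck_val HC) in HL.
case: (preceq_ev H1) => [[-> ->] //|/= Hev].
apply: self_chain => //; first exact: (Ck_event Hv HC).
case: (leqP t' (C q)) => // Hlt; exfalso.
have H0 : (0 < t')%N by apply: leq_ltn_trans Hlt.
have Hs := ev_pos Hev H0.
have Et : L t' q = L t'.-1 q + 1 by rewrite -{1}(prednK H0) L_succ Hs.
have := Ck_ge HC (t := t'.-1) (p := q); rewrite -ltnS prednK // => /(_ Hlt).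
move: HL; rewrite Et; ilia.
Qed.

Lemma back_chain s : forall p t, path e p s -> event sched p t ->
  (forall x, lift0 x + (size s)%:Z <= L t p) ->
  exists t', [/\ event sched (last p s) t', preceq e sched (last p s, t') (p, t)
             & L t p - (size s)%:Z <= L t' (last p s)].
Proof.
elim: s => [|y s IH] p t /=.
  move=> _ Hev _; exists t; split => //; first exact: rt_refl.
  ilia.
move=> /andP [Hpy Hpath] Hev Hb.
have H0 : (0 < t)%N.
  case: t Hev Hb => // _ /(_ p) /=; ilia.
have [t1 [Hl Ht1 Hev1]] := back_step Hev H0 Hpy.
have [|t' [Hev' Hpre HL]] := IH y t1 Hpath Hev1.
  move=> x; have := Hb x; move: Ht1; ilia.
exists t'; split => //; first exact: rt_trans _ _ _ _ _ Hpre (rt_step _ _ _ _ Hl).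
move: HL Ht1; ilia.
Qed.
End PartB.

Theorem theorem1 (V : finType) (e : rel V) (M : nat) (D : nat)
    (gamma : nat -> V -> nat) (sched : nat -> V -> bool) (p0 : V)
    (k : int) (rho : nat) :
    (3 <= M)%N -> (2 <= #|V|)%N ->
    symmetric e -> irreflexive e -> connected e ->
    is_diameter e D ->
    execution e M gamma sched ->
    WU0 e M (gamma 0%N) ->
    (forall t p, exists t', (t <= t')%N /\ sched t' p) ->
    (forall q, 0 <= delta e M (gamma 0%N) p0 q) ->
    let bot0 : int := (gamma 0%N p0)%:Z in
    let lift0 : V -> int := fun p => bot0 + delta e M (gamma 0%N) p0 p in
    bot0 + D%:Z <= k -> (1 <= rho)%N ->
    exists C C' : V -> nat,
      [/\ is_Ck lift0 sched k C, is_Ck lift0 sched (k + rho%:Z) C',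
          coherent e sched C /\ coherent e sched C', cut_le sched C C' &
          wavelet e sched rho C C' (fun p t => t = C' p)].
Proof.
move=> HM _ Hsym _ _ [Hdiam _] Hex HWU0 Hinf _ bot0 lift0 Hk Hrho.
have Hpath : forall p, exists s, [/\ path e p0 s, last p0 s = p & (size s <= D)%N].
  by move=> p; have [s Hs] := Hdiam p0 p; exists s.
have Hlift : forall p, lift0 p <= bot0 + D%:Z.
  move=> p; have [s [H1 H2 H3]] := Hpath p.
  rewrite /lift0 (delta_path HWU0 H1 H2).
  have := delay_le HM (gamma 0%N) p0 s; move: H3; ilia.
have HI0 : Inv e M gamma sched lift0 0.
  split.
    move=> p; have [s [H1 H2 _]] := Hpath p.
    have [z Hz] := delay_cong M (gamma 0%N) p0 s.
    exists z; rewrite /= /lift0 (delta_path HWU0 H1 H2); move: Hz; rewrite H2 /bot0; ilia.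
  move=> p q Hpq; have [s [H1 H2 _]] := Hpath p.
  have Hq1 : path e p0 (rcons s q) by rewrite rcons_path H1 H2.
  have Hq2 : last p0 (rcons s q) = q by rewrite last_rcons.
  rewrite /= /lift0 (delta_path HWU0 Hq1 Hq2) (delta_path HWU0 H1 H2) delay_rcons H2.
  have := ominus_le1 HM (gamma 0%N q)%:Z (gamma 0%N p)%:Z; ilia.
have Hv1 : forall p, lift0 p <= k by move=> p; have := Hlift p; ilia.
have Hv2 : forall p, lift0 p <= k + rho%:Z by move=> p; have := Hlift p; ilia.
have [C HC] := Ck_exists Hinf Hv1.
have [C' HC'] := Ck_exists Hinf Hv2.
have Coh1 := Ck_coherent HM Hsym Hex HI0 Hv1 HC.
have Coh2 := Ck_coherent HM Hsym Hex HI0 Hv2 HC'.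
have HCC : forall p, (C p <= C' p)%N.
  move=> p; case: (leqP (C p) (C' p)) => // Hlt; exfalso.
  have := Ck_lt Hv1 HC Hlt; rewrite (Ck_val HC'); ilia.
have Hcut : cut_le sched C C' by move=> p t _ Ht; apply: leq_trans Ht (HCC p).
exists C, C'; split => //; split => //.
- by exists p0, (C' p0).
- move=> p t ->; split; first exact: (Ck_event Hv2 HC').
    by apply: (self_chain e lift0) => //; [exact: (Ck_event Hv1 HC) | exact: (Ck_event Hv2 HC')].
  exact: rt_refl.
- move=> p t -> q [s [Hs1 Hs2 Hs3]].
  have Hev := Ck_event Hv2 HC' p.
  have [|t' [Hev' Hpre HL]] := back_chain HM Hsym Hex HI0 Hs1 Hev.
    move=> x; rewrite (Ck_val HC'); have := Hv1 x; move: Hs3; ilia.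
  rewrite Hs2 in Hev' Hpre HL.
  exists t'; split => //; split => //.
    apply: (self_chain e lift0) => //; first exact: (Ck_event Hv1 HC).
    case: (leqP (C q) t') => // Hlt; exfalso.
    have := Ck_lt Hv1 HC Hlt; move: HL; rewrite (Ck_val HC'); move: Hs3; ilia.
  case: Coh2 => _ Hc; apply: (Hc q t' p (C' p)) => //; exact: rt_refl.
Qed.
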